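(* Let $B_{n,k}=[x^n]\,\frac{1+3x^2}{1+x^2}\left(\frac{x}{1+x^2}\right)^k$ be the coefficient array of the Boubaker polynomials (the case $r=3$ of the restricted Chebyshev–Boubaker polynomials). Then for all $n\ge 0$, $B_{2n,n}=0^n$, i.e. $B_{0,0}=1$ and $B_{2n,n}=0$ for $n\ge 1$.
   Context: $[x^n]h(x)$ denotes the coefficient of $x^n$ in $h(x)$; $0^n$ is $1$ for $n=0$ and $0$ for $n>0$. The Boubaker polynomials are $B_n(x)=\sum_k B_{n,k}x^k$. *)

(* Defs.v *)
From HB Require Import structures.
From mathcomp Require Import all_boot all_order all_algebra.
Set Implicit Arguments. Unset Strict Implicit. Unset Printing Implicit Defensive.
Import Order.TTheory GRing.Theory Num.Theory.
Local Open Scope ring_scope.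

Definition fps := nat -> rat.

Definition fps_of_poly (p : {poly rat}) : fps := fun n => p`_n.

Definition fps_mul (f g : fps) : fps :=
  fun n => \sum_(i < n.+1) f i * g (n - i)%N.

Definition fps_one : fps := fun n => (n == 0%N)%:R.

Definition fps_pow (f : fps) (k : nat) : fps := iter k (fps_mul f) fps_one.

(* first n+1 coefficients of the inverse series g of f (f 0 != 0):
   g 0 = (f 0)^-1,  g m = - (f 0)^-1 * \sum_(1 <= i <= m) f i * g (m - i) *)
Fixpoint fps_inv_seq (f : fps) (n : nat) : seq rat :=
  match n with
  | 0 => [:: (f 0%N)^-1]
  | m.+1 => let s := fps_inv_seq f m in
      rcons s (- (f 0%N)^-1 *
               \sum_(i < m.+1) f i.+1 * nth 0 s (m - i)%N)
  end.

Definition fps_inv (f : fps) : fps := fun n => nth 0 (fps_inv_seq f n) n.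

Definition boubakerB (n k : nat) : rat :=
  let P := fps_of_poly (1 + 3%:R *: 'X^2) in
  let Qinv := fps_inv (fps_of_poly (1 + 'X^2)) in
  fps_mul (fps_mul P Qinv) (fps_pow (fps_mul (fps_of_poly 'X) Qinv) k) n.

(* Main.v *)
Require Import Defs.
From HB Require Import structures.
From mathcomp Require Import all_boot all_order all_algebra.
From mathcomp Require Import ring.
Import GRing.Theory Num.Theory.
Local Open Scope ring_scope.

Definition eqm (N : nat) (p r : {poly rat}) := forall i, (i < N)%N -> p`_i = r`_i.

Lemma eqm_refl N p : eqm N p p. Proof. by []. Qed.
Lemma eqm_sym N p r : eqm N p r -> eqm N r p.
Proof. by move=> h i hi; rewrite h. Qed.
Lemma eqm_trans N p r s : eqm N p r -> eqm N r s -> eqm N p s.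
Proof. by move=> h1 h2 i hi; rewrite h1 // h2. Qed.
Lemma eqmD N p p' r r' : eqm N p p' -> eqm N r r' -> eqm N (p + r) (p' + r').
Proof. by move=> h1 h2 i hi; rewrite !coefD h1 // h2. Qed.
Lemma eqmN N p p' : eqm N p p' -> eqm N (- p) (- p').
Proof. by move=> h1 i hi; rewrite !coefN h1. Qed.
Lemma eqmMn N p p' k : eqm N p p' -> eqm N (p *+ k) (p' *+ k).
Proof. by move=> h1 i hi; rewrite !coefMn h1. Qed.
Lemma eqmM N p p' r r' : eqm N p p' -> eqm N r r' -> eqm N (p * r) (p' * r').
Proof.
move=> h1 h2 i hi; rewrite !coefM; apply: eq_bigr => [[j hj]] _ /=.
rewrite h1 ?h2 //; last by apply: leq_ltn_trans hi.
by apply: leq_ltn_trans hi; apply: leq_subr.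
Qed.
Lemma eqmX N p p' k : eqm N p p' -> eqm N (p ^+ k) (p' ^+ k).
Proof.
move=> h; elim: k => [|k IH]; first by rewrite !expr0.
by rewrite !exprS; apply: eqmM.
Qed.
Definition th (p : {poly rat}) := 'X * p^`().
Lemma eqmT N p p' : eqm N p p' -> eqm N (th p) (th p').
Proof.
move=> h i hi; rewrite /th !coefXM; case: i hi => [|i] hi //=.
by rewrite !coef_deriv h.
Qed.

Definition T (N : nat) (f : fps) : {poly rat} := \poly_(i < N) f i.

Lemma fps_mulE N f g i : (i < N)%N -> fps_mul f g i = (T N f * T N g)`_i.
Proof.
move=> hi; rewrite coefM /fps_mul; apply: eq_bigr => [[j hj]] _ /=.
rewrite !coef_poly ifT; last by apply: leq_ltn_trans hi.
by rewrite ifT //; apply: leq_ltn_trans hi; apply: leq_subr.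
Qed.
Lemma T_mul N f g : eqm N (T N (fps_mul f g)) (T N f * T N g).
Proof. by move=> i hi; rewrite coef_poly hi (fps_mulE _ f g _ hi). Qed.
Lemma T_one N : eqm N (T N fps_one) 1.
Proof. by move=> i hi; rewrite coef_poly hi coef1. Qed.
Lemma T_poly N p : eqm N (T N (fps_of_poly p)) p.
Proof. by move=> i hi; rewrite coef_poly hi. Qed.
Lemma T_pow N f k : eqm N (T N (fps_pow f k)) (T N f ^+ k).
Proof.
elim: k => [|k IH]; first by rewrite expr0; apply: T_one.
rewrite exprS; apply: eqm_trans (T_mul _ _ _) _; apply: eqmM => //.
Qed.
Lemma T_ext N f g : (forall i, f i = g i) -> eqm N (T N f) (T N g).
Proof. by move=> h i hi; rewrite !coef_poly hi h. Qed.

Lemma inv_seq_size f n : size (fps_inv_seq f n) = n.+1.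
Proof. by elim: n => [|n IH] //=; rewrite size_rcons IH. Qed.
Lemma inv_seq_nth f n m : (m <= n)%N -> nth 0 (fps_inv_seq f n) m = fps_inv f m.
Proof.
elim: n m => [|n IH] m hm; first by case: m hm.
rewrite /= nth_rcons inv_seq_size.
case: ltnP => h; first by rewrite IH.
have -> : m = n.+1 by apply/eqP; rewrite eqn_leq hm.
by rewrite eqxx /fps_inv /= nth_rcons inv_seq_size ltnn eqxx.
Qed.
Lemma fps_invS f m : fps_inv f m.+1 =
  - (f 0%N)^-1 * \sum_(i < m.+1) f i.+1 * fps_inv f (m - i)%N.
Proof.
rewrite {1}/fps_inv /= nth_rcons inv_seq_size ltnn eqxx.
congr (_ * _); apply: eq_bigr => i _; rewrite inv_seq_nth //; exact: leq_subr.
Qed.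
Lemma fps_mul_inv f n : f 0%N != 0 -> fps_mul f (fps_inv f) n = fps_one n.
Proof.
move=> h; case: n => [|m]; rewrite /fps_mul /fps_one.
  by rewrite big_ord1 /fps_inv /= mulfV.
rewrite big_ord_recl /= subn0 fps_invS mulrA mulrN mulfV // mulN1r.
under eq_bigr => i _ do rewrite /bump /= add1n subSS.
by rewrite addNr.
Qed.

Lemma key (N n : nat) (q : {poly rat}) : (n < N)%N ->
  eqm N ((1 + 'X^2) * q) 1 ->
  ((1 + 3%:R *: 'X^2) * q ^+ n.+1)`_n = (0:rat) ^+ n.
Proof.
move=> hn h0.
have th1 : th 1 = 0 by rewrite /th -polyC1 derivC mulr0.
have thP : th (1 + 'X^2) = 'X^2 *+ 2.
  by rewrite /th derivD -polyC1 derivC derivXn add0r /= mulrnAr -expr2.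
have thM : forall p r, th (p * r) = th p * r + p * th r.
  by move=> p r; rewrite /th derivM; ring.
have h1 : eqm N (('X^2 *+ 2) * q + (1 + 'X^2) * th q) 0.
  by rewrite -th1 -thP -thM; apply: eqmT.
have h2 : eqm N (th q) (- ('X^2 *+ 2) * q ^+ 2).
  have e : th q = (('X^2 *+ 2) * q + (1 + 'X^2) * th q) * q
                  - ('X^2 *+ 2) * q ^+ 2 + th q * (1 - (1 + 'X^2) * q).
    by ring.
  rewrite e; apply: eqm_trans (_ : eqm N _ (0 * q - ('X^2 *+ 2) * q ^+ 2 + th q * (1 - 1))) _.
    apply: eqmD; last by apply: eqmM => //; apply: eqmD => //; apply: eqmN.
    by apply: eqmD => //; apply: eqmM.
  by move=> i hi; rewrite subrr mulr0 addr0 mul0r sub0r mulNr.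
case: n hn => [|m] hn.
  rewrite expr0 coefM big_ord1 /= expr1.
  have := h0 0%N (leq_ltn_trans (leq0n _) hn).
  rewrite coefM big_ord1 !coefD !coef1 coefZ !coefXn /= mulr0 !addr0.
  by [].
have thX : th (q ^+ m.+1) = th q * q ^+ m *+ m.+1.
  by rewrite /th deriv_exp /= mulrnAr mulrA.
have h3 : eqm N (((1 + 3%:R *: 'X^2) * q ^+ m.+2) *+ m.+1)
               (q ^+ m.+1 *+ m.+1 - th (q ^+ m.+1)).
  have e : ((1 + 3%:R *: 'X^2) * q ^+ m.+2) *+ m.+1 =
     ((1 + 'X^2) * q * q ^+ m.+1 + ('X^2 *+ 2) * q ^+ 2 * q ^+ m) *+ m.+1.
    rewrite -mul_polyC polyC_natr !exprS; ring.
  rewrite e thX; apply: eqm_trans (_ : eqm N _ ((1 * q ^+ m.+1 + ('X^2 *+ 2) * q ^+ 2 * q ^+ m) *+ m.+1)) _.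
    by apply: eqmMn; apply: eqmD => //; apply: eqmM.
  apply: eqm_trans (_ : eqm N _ (q ^+ m.+1 *+ m.+1 - (- ('X^2 *+ 2) * q ^+ 2) * q ^+ m *+ m.+1)) _.
    have E : (1 * q ^+ m.+1 + ('X^2 *+ 2) * q ^+ 2 * q ^+ m) *+ m.+1 =
      q ^+ m.+1 *+ m.+1 - (- ('X^2 *+ 2) * q ^+ 2) * q ^+ m *+ m.+1 by ring.
    by rewrite E.
  apply: eqmD => //; apply: eqmN; apply: eqmMn; apply: eqmM => //; exact: eqm_sym.
have := h3 m.+1 hn.
rewrite coefMn coefB coefMn /th coefXM /= coef_deriv subrr expr0n /=.
by move/eqP; rewrite mulrn_eq0 /= => /eqP.
Qed.

Theorem mainTheorem4 : forall n : nat, boubakerB n.*2 n = 0 ^+ n.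
Proof.
move=> n.
pose N := n.*2.+1.
pose F := fps_of_poly (1 + 'X^2).
pose q := T N (fps_inv F).
have F0 : F 0%N != 0.
  by rewrite /F /fps_of_poly coefD coef1 coefXn /=.
have h0 : eqm N ((1 + 'X^2) * q) 1.
  apply: (eqm_trans _ _ _ _ (eqm_sym _ _ _ (eqmM _ _ _ _ _ (T_poly N _) (eqm_refl N q)))).
  apply: (eqm_trans _ _ _ _ (eqm_sym _ _ _ (T_mul _ _ _))).
  apply: (eqm_trans _ _ _ _ _ (T_one N)).
  by apply: T_ext => i; apply: fps_mul_inv.
rewrite /boubakerB (fps_mulE N); last by rewrite /N ltnS.
have hq : eqm N (T N (fps_mul (fps_of_poly 'X) (fps_inv F))) ('X * q).
  by apply: (eqm_trans _ _ _ _ (T_mul _ _ _)); apply: eqmM => //; apply: T_poly.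
rewrite (eqmM _ _ _ _ _ (eqm_trans _ _ _ _ (T_mul _ _ _) (eqmM _ _ _ _ _ (T_poly N _) (eqm_refl N q)))
              (eqm_trans _ _ _ _ (T_pow _ _ _) (eqmX _ _ _ n hq))); last by rewrite /N ltnS.
have -> : (1 + 3%:R *: 'X^2) * q * ('X * q) ^+ n =
          'X^n * ((1 + 3%:R *: 'X^2) * q ^+ n.+1).
  by rewrite exprMn (exprS q n) mulrCA -mulrA.
rewrite coefXnM ifF; last by rewrite -addnn ltnNge leq_addr.
rewrite -addnn addnK; apply: (key N) => //.
by rewrite /N ltnS -addnn leq_addr.
Qed.
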